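(* Let $\alpha>0$, $t_0>0$, $x_0\in\mathcal H$, and let $x:[t_0,+\infty)\to\mathcal H$ be a solution of the Cauchy problem $$\tfrac{\alpha}{t}\dot x(t)+\operatorname{proj}_{C(x(t))+\ddot x(t)}(0)=0\ (t>t_0),\qquad x(t_0)=x_0,\ \dot x(t_0)=0 .$$ Then for all $i=1,\dots,m$ and all $t\in[t_0,+\infty)$ we have $f_i(x(t))\le f_i(x_0)$, i.e. $x(t)\in\{y\in\mathcal H:f_j(y)\le f_j(x_0)\ \forall j\}$ for all $t\ge t_0$.
   Context: $\mathcal H$ is a real Hilbert space. $f_1,\dots,f_m:\mathcal H\to\mathbb R$ are convex and continuously differentiable. $C(x)=\operatorname{co}\{\nabla f_i(x):i=1,\dots,m\}$. For a closed convex $K$, $\operatorname{proj}_K(y)=\arg\min_{w\in K}\|w-y\|^2$. A solution of the Cauchy problem is a function $x:[t_0,+\infty)\to\mathcal H$ such that: $x\in C^1([t_0,+\infty))$; $\dot x$ is absolutely continuous on $[t_0,T]$ for every $T\ge t_0$; there is a Bochner measurable $\ddot x$ with $\dot x(t)=\dot x(t_0)+\int_{t_0}^t\ddot x(s)\,ds$ for all $t$, and $\frac{d}{dt}\dot x=\ddot x$ a.e.; the equation holds for almost all $t\ge t_0$; and the initial conditions hold. *)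

(* Defs.v *)
From HB Require Import structures.
From mathcomp Require Import all_boot all_order all_algebra.
From mathcomp Require Import all_classical all_reals all_analysis.
Set Implicit Arguments.
Unset Strict Implicit.
Unset Printing Implicit Defensive.
Import Order.TTheory GRing.Theory Num.Theory.
Import numFieldNormedType.Exports.
Local Open Scope classical_set_scope.
Local Open Scope ring_scope.

Section Defs.
Context {R : realType} {H : completeNormedModType R}.

(* [inner] is an inner product on H inducing the norm of H:
   (H, inner) is then a real Hilbert space. *)
Definition is_inner_product (inner : H -> H -> R) : Prop :=
  [/\ forall u v, inner u v = inner v u,
      forall (a : R) u v w, inner (a *: u + v) w = a * inner u w + inner v w
    & forall u, inner u u = `|u| ^+ 2].

Definition is_gradient (inner : H -> H -> R) (f : H -> R) (g : H -> H) : Prop :=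
  forall x, differentiable f x /\ forall h, 'd f x h = inner (g x) h.

Definition conv_hull {m : nat} (v : 'I_m -> H) : set H :=
  [set w | exists lam : 'I_m -> R,
     [/\ forall i, 0 <= lam i, \sum_(i < m) lam i = 1
       & w = \sum_(i < m) lam i *: v i]].

Definition Cset {m : nat} (grad : 'I_m -> H -> H) (x : H) : set H :=
  conv_hull (fun i => grad i x).

Definition is_proj (K : set H) (y p : H) : Prop :=
  K p /\ forall w, K w -> `|p - y| <= `|w - y|.

(* derivative of f : R -> H at t relative to the set D (one-sided at
   endpoints of intervals) *)
Definition has_deriv_within (D : set R) (f : R -> H) (t : R) (l : H) : Prop :=
  (fun s => (s - t)^-1 *: (f s - f t)) @ within (D `\ t) (nbhs t) --> l.

Definition abs_cont_on (a b : R) (f : R -> H) : Prop :=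
  forall eps : R, 0 < eps -> exists2 delta : R, 0 < delta &
    forall (n : nat) (u v : 'I_n -> R),
      (forall k, a <= u k /\ u k <= v k /\ v k <= b) ->
      (forall k l, k != l -> v k <= u l \/ v l <= u k) ->
      \sum_(k < n) (v k - u k) < delta ->
      \sum_(k < n) `|f (v k) - f (u k)| < eps.

Definition bochner_measurable (D : set R) (g : R -> H) : Prop :=
  exists s : nat -> R -> H,
    (forall n, finite_set (range (s n))) /\
    (forall n (h : H), measurable (s n @^-1` [set h])) /\
    {ae (@lebesgue_measure R), forall t, D t -> (fun n => s n t) @ \oo --> g t}.

(* g is Bochner integrable on [a,b] and w = \int_a^b g (Bochner integral).
   For a Bochner integrable g the Bochner integral is the unique vector w
   such that <w, y> = \int_a^b <g, y> for every y. *)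
Definition bochner_integral_eq (inner : H -> H -> R) (a b : R) (g : R -> H)
    (w : H) : Prop :=
  (@lebesgue_measure R).-integrable `[a, b] (fun s => (`|g s|)%:E) /\
  forall y : H, (inner w y)%:E =
    (\int[@lebesgue_measure R]_(s in `[a, b]) (inner (g s) y)%:E)%E.

Definition is_solution (inner : H -> H -> R) {m : nat} (grad : 'I_m -> H -> H)
    (alpha t0 : R) (x0 : H) (x : R -> H) : Prop :=
  exists (xd xdd : R -> H),
      (forall t, t0 <= t -> has_deriv_within `[t0, +oo[ x t (xd t)) /\
      {within `[t0, +oo[, continuous xd} /\
      (forall T, t0 <= T -> abs_cont_on t0 T xd) /\
      bochner_measurable `[t0, +oo[ xdd /\
      (forall t, t0 <= t -> bochner_integral_eq inner t0 t xdd (xd t - xd t0)) /\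
      {ae (@lebesgue_measure R), forall t, t0 < t ->
          has_deriv_within `[t0, +oo[ xd t (xdd t)} /\
      {ae (@lebesgue_measure R), forall t, t0 < t ->
          is_proj [set c + xdd t | c in Cset grad (x t)] 0
                  (- ((alpha / t) *: xd t))} /\
      x t0 = x0 /\ xd t0 = 0.

End Defs.

(* Main.v *)
Require Import Defs.
From HB Require Import structures.
From mathcomp Require Import all_boot all_order all_algebra.
From mathcomp Require Import all_classical all_reals all_analysis.
From mathcomp Require Import measurable_realfun.
From mathcomp Require Import ring lra.
Import Order.TTheory GRing.Theory Num.Theory.
Import numFieldNormedType.Exports.
Local Open Scope classical_set_scope.
Local Open Scope ring_scope.

Section Near.
Context {R : realType}.

Lemma withinR_P (A : set R) (c : R) (P : R -> Prop) :
  (\forall r \near within A (nbhs c), P r) <->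
  exists2 d : R, 0 < d & forall r, A r -> `|r - c| < d -> P r.
Proof.
rewrite /within /=; split.
  move=> /nbhs_ballP [d d0 Hd]; exists d => // r Ar rc.
  apply: Hd => //; rewrite /ball /= distrC; exact: rc.
move=> [d d0 Hd]; apply/nbhs_ballP; exists d => // r.
rewrite /ball /= distrC => rc Ar; exact: Hd.
Qed.

Lemma nbhsR_P (c : R) (P : R -> Prop) :
  (\forall r \near c, P r) <->
  exists2 d : R, 0 < d & forall r, `|r - c| < d -> P r.
Proof.
split.
  move=> /nbhs_ballP [d d0 Hd]; exists d => // r rc.
  apply: Hd => //; rewrite /ball /= distrC; exact: rc.
move=> [d d0 Hd]; apply/nbhs_ballP; exists d => // r.
rewrite /ball /= distrC => rc; exact: Hd.
Qed.
End Near.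
Section Inner.
Context {R : realType} {H : completeNormedModType R} (inner : H -> H -> R)
  (hin : is_inner_product inner).

Lemma innerC u v : inner u v = inner v u.
Proof. by case: hin. Qed.
Lemma innerxx u : inner u u = `|u| ^+ 2.
Proof. by case: hin. Qed.
Lemma innerDZl a u v w : inner (a *: u + v) w = a * inner u w + inner v w.
Proof. by case: hin. Qed.
Lemma inner0l w : inner 0 w = 0.
Proof.
have := innerDZl 1 0 0 w; rewrite scale1r addr0 mul1r => h.
by have := h; lra.
Qed.
Lemma innerDl u v w : inner (u + v) w = inner u w + inner v w.
Proof. by rewrite -[u]scale1r innerDZl mul1r scale1r. Qed.
Lemma innerZl a u w : inner (a *: u) w = a * inner u w.
Proof. by rewrite -[a *: u]addr0 innerDZl inner0l addr0. Qed.
Lemma innerNl u w : inner (- u) w = - inner u w.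
Proof. by rewrite -scaleN1r innerZl mulN1r. Qed.
Lemma innerBl u v w : inner (u - v) w = inner u w - inner v w.
Proof. by rewrite innerDl innerNl. Qed.
Lemma inner0r w : inner w 0 = 0.
Proof. by rewrite innerC inner0l. Qed.
Lemma innerDr u v w : inner w (u + v) = inner w u + inner w v.
Proof. by rewrite innerC innerDl !(innerC w). Qed.
Lemma innerZr a u w : inner w (a *: u) = a * inner w u.
Proof. by rewrite innerC innerZl innerC. Qed.
Lemma innerNr u w : inner w (- u) = - inner w u.
Proof. by rewrite innerC innerNl innerC. Qed.
Lemma innerBr u v w : inner w (u - v) = inner w u - inner w v.
Proof. by rewrite innerDr innerNr. Qed.

Lemma inner_CS u v : `|inner u v| <= `|u| * `|v|.
Proof.
have [->|v0] := eqVneq v 0; first by rewrite inner0r !normr0 mulr0.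
have nv : 0 < `|v| by rewrite normr_gt0.
set p := inner u v.
have key : forall s, 2 * s * p <= `|u| ^+ 2 + s ^+ 2 * `|v| ^+ 2.
  move=> s; have := normr_ge0 (u - s *: v).
  move=> _; have : 0 <= `|u - s *: v| ^+ 2 by rewrite exprn_ge0.
  rewrite -innerxx !innerBl !innerBr !innerZl !innerZr !innerxx.
  rewrite (innerC v u) -/p; lra.
have := key (p / `|v| ^+ 2).
have hv2 : 0 < `|v| ^+ 2 by rewrite exprn_gt0.
move=> hk.
have hk2 : p ^+ 2 <= `|u| ^+ 2 * `|v| ^+ 2.
  have e1 : 2 * (p / `|v| ^+ 2) * p = 2 * p ^+ 2 / `|v| ^+ 2 by rewrite expr2; field; lra.
  have e2 : (p / `|v| ^+ 2) ^+ 2 * `|v| ^+ 2 = p ^+ 2 / `|v| ^+ 2.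
    by rewrite expr_div_n; field; lra.
  rewrite e1 e2 in hk.
  have : p ^+ 2 / `|v| ^+ 2 <= `|u| ^+ 2 by lra.
  by rewrite ler_pdivrMr // .
have hu := normr_ge0 u.
rewrite -exprMn in hk2.
have huv : 0 <= `|u| * `|v| by rewrite mulr_ge0.
rewrite -(ler_pXn2r (n:=2)) ?nnegrE ?normr_ge0 //.
by rewrite real_normK ?num_real.
Qed.
End Inner.
Arguments innerC {R H inner}.
Arguments innerxx {R H inner}.
Arguments innerDZl {R H inner}.
Arguments inner0l {R H inner}.
Arguments innerDl {R H inner}.
Arguments innerZl {R H inner}.
Arguments innerNl {R H inner}.
Arguments innerBl {R H inner}.
Arguments inner0r {R H inner}.
Arguments innerDr {R H inner}.
Arguments innerZr {R H inner}.
Arguments innerNr {R H inner}.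
Arguments innerBr {R H inner}.
Arguments inner_CS {R H inner}.
Section Meas.
Context {R : realType}.

Lemma sum_len_lt (U : set R) (dl : R) n (u v : nat -> R) :
  measurable U -> (lebesgue_measure U < dl%:E)%E ->
  (forall k, (k < n)%N -> u k <= v k) ->
  (forall k l, (k < n)%N -> (l < n)%N -> k != l -> v k <= u l \/ v l <= u k) ->
  (forall k r, (k < n)%N -> u k <= r -> r <= v k -> U r) ->
  \sum_(k < n) (v k - u k) < dl.
Proof.
move=> mU hU huv hdis hsub.
pose F k : set R := if (k < n)%N then `]u k, v k]%classic else set0.
have mF : forall k, measurable (F k).
  by move=> k; rewrite /F; case: ifP => _ //; exact: measurable_itv.
have tF : trivIset setT F.
  move=> i j _ _ [z [Fi Fj]].
  move: Fi Fj; rewrite /F; case: ifP => hi; last by [].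
  case: ifP => hj; last by [].
  rewrite /= !in_itv /= => /andP [a1 a2] /andP [b1 b2].
  case: (eqVneq i j) => // ij; exfalso.
  case: (hdis i j hi hj ij) => h; clear hU; lra.
have := measure_bigsetU lebesgue_measure mF tF n.
have -> : \sum_(i < n) lebesgue_measure (F i) = (\sum_(k < n) (v k - u k))%:E.
  rewrite -sumEFin; apply: eq_bigr => k _.
  rewrite /F ltn_ord lebesgue_measure_itv /= lte_fin.
  have := huv k (ltn_ord k); rewrite le_eqVlt => /orP [/eqP ->|->].
    by rewrite ltxx subrr.
  by rewrite -EFinD.
rewrite -lte_fin => <-.
apply: (le_lt_trans _ hU); apply: le_measure; rewrite ?inE //.
  by apply: bigsetU_measurable => k _; exact: mF.
move=> z; rewrite -bigcup_mkord => -[k /= kn]; rewrite /F kn /= in_itv /= => /andP [h1 h2].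
by apply: (hsub k z kn) => //; clear hU; lra.
Qed.
End Meas.
Section Claim.
Context {R : realType} {H : completeNormedModType R}.
Variables (a e K C : R) (E : R -> R) (g : R -> H) (U : set R).

Definition claim (s : R) : Prop :=
  exists n (u v : nat -> R),
   [/\ forall k, (k < n)%N -> a <= u k /\ u k <= v k /\ v k <= s,
       forall k l, (k < n)%N -> (l < n)%N -> k != l -> v k <= u l \/ v l <= u k,
       forall k r, (k < n)%N -> u k <= r -> r <= v k -> U r &
       E s - E a <= e * (s - a) + \sum_(k < n) (K * `|g (v k) - g (u k)| + C * (v k - u k))].

Lemma claim_a : claim a.
Proof.
exists 0%N, (fun=> 0), (fun=> 0); split => //.
by rewrite big_ord0 !subrr mulr0 addr0.
Qed.

Lemma claim_ext1 s r : 0 <= e -> claim s -> s <= r -> E r - E s <= e * (r - s) -> claim r.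
Proof.
move=> e0 [n [u [v [h1 h2 h3 h4]]]] sr hE.
exists n, u, v; split => //.
  by move=> k kn; have [? [? ?]] := h1 k kn; split => //; split => //; exact: le_trans sr.
set S := \sum_(k < n) _ in h4 *.
lra.
Qed.

Lemma ltS_case k n : (k < n.+1)%N -> k = n \/ (k < n)%N.
Proof. by rewrite ltnS leq_eqVlt => /orP [/eqP ->|]; [left|right]. Qed.

Lemma claim_ext2 s r : 0 <= e -> claim s -> a <= s -> s <= r ->
  (forall z, s <= z -> z <= r -> U z) ->
  E r - E s <= K * `|g r - g s| + C * (r - s) -> claim r.
Proof.
move=> e0 [n [u [v [h1 h2 h3 h4]]]] as_ sr hU hE.
exists n.+1, (fun k => if k == n then s else u k), (fun k => if k == n then r else v k).
split.
- move=> k /ltS_case [->|kn]; first by rewrite eqxx.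
  rewrite (ltn_eqF kn); have [? [? ?]] := h1 k kn; split => //; split => //.
  exact: le_trans sr.
- move=> k l /ltS_case [->|kn] /ltS_case [->|ln].
  + by rewrite eqxx.
  + by move=> _; rewrite eqxx (ltn_eqF ln); right; have [? [? ?]] := h1 l ln.
  + by move=> _; rewrite eqxx (ltn_eqF kn); left; have [? [? ?]] := h1 k kn.
  + by rewrite (ltn_eqF kn) (ltn_eqF ln); exact: h2.
- move=> k z /ltS_case [->|kn]; first by rewrite eqxx; exact: hU.
  by rewrite (ltn_eqF kn); exact: h3.
- rewrite big_ord_recr /= eqxx.
  rewrite (eq_bigr (fun k : 'I_n => K * `|g (v k) - g (u k)| + C * (v k - u k))); last first.
    by move=> k _ /=; rewrite (ltn_eqF (ltn_ord k)).
  set S := \sum_(k < n) _ in h4 *.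
  have : e * (s - a) <= e * (r - a) by apply: ler_wpM2l => //; lra.
  lra.
Qed.
End Claim.

Arguments claim_ext2 {R H a e K C E g U s r}.
Arguments claim_ext1 {R H a e K C E g U s r}.
Arguments claim_a {R H a e K C E g U}.
Arguments sum_len_lt {R U dl n u v}.
Section Mono.
Context {R : realType} {H : completeNormedModType R}.

Lemma minfacts (x y : R) : Num.min x y <= x /\ Num.min x y <= y.
Proof. by rewrite !ge_min !lexx orbT. Qed.

Lemma ac_mono (a b K C : R) (E : R -> R) (g : R -> H) (N : set R) :
  a <= b -> 0 <= K -> 0 <= C -> measurable N -> lebesgue_measure N = 0%E ->
  abs_cont_on a b g ->
  (forall c, a <= c -> c <= b -> ~ N c -> forall e, 0 < e ->
     exists2 d, 0 < d & forall r, a <= r -> r <= b -> `|r - c| < d ->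
       (c < r -> E r - E c <= e * (r - c)) /\ (r < c -> E c - E r <= e * (c - r))) ->
  (forall c, a <= c -> c <= b -> exists2 d, 0 < d & forall r, a <= r -> r <= b ->
     `|r - c| < d -> `|E r - E c| <= K * `|g r - g c| + C * `|r - c|) ->
  E b <= E a.
Proof.
move=> ab K0 C0 mN N0 hac hgood hall.
suff key : forall e, 0 < e -> E b - E a <= e * (b - a + K + C).
  apply/ler_addgt0Pr => e e0.
  have hp : 0 < b - a + K + C + 1 by lra.
  have := key (e / (b - a + K + C + 1)) (divr_gt0 e0 hp).
  have -> : e / (b - a + K + C + 1) * (b - a + K + C) = e - e / (b - a + K + C + 1).
    by field; lra.
  have : 0 < e / (b - a + K + C + 1) by exact: divr_gt0.
  lra.
move=> e e0.
have [dl1 dl10 hdl1] := hac e e0.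
pose dl := Num.min dl1 e.
have [dl_1 dl_e] : dl <= dl1 /\ dl <= e := minfacts _ _.
have dl0 : 0 < dl by rewrite lt_min dl10 e0.
have Nfin : (lebesgue_measure N < +oo)%E by rewrite N0 ltey.
have [U [oU NU hUN]] := lebesgue_regularity_outer mN Nfin dl0.
have mU : measurable U := open_measurable oU.
have hU : (lebesgue_measure U < dl%:E)%E.
  apply: le_lt_trans hUN.
  have h1 : (lebesgue_measure U <= lebesgue_measure ((U `\` N) `|` N))%E.
    apply: le_measure; rewrite ?inE //.
      by apply: measurableU => //; apply: measurableD.
    by move=> z Uz; case: (pselect (N z)) => Nz; [right|left].
  apply: (le_trans h1); apply: (le_trans (measureU2 _ _ _)) => //.
    exact: measurableD.
  set X := (X in (_ + X)%E).
  have -> : X = 0%E by exact: N0.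
  by rewrite adde0.
pose A := [set s | a <= s <= b /\ forall r, a <= r -> r <= s -> claim a e K C E g U r].
have Aa : A a.
  split; first by rewrite lexx ab.
  move=> r ar ra; have -> : r = a by apply/eqP; rewrite eq_le ar ra.
  exact: claim_a.
have hsA : has_sup A.
  split; first by exists a.
  by exists b => s [/andP [_ ->]].
set c := sup A.
have ac : a <= c := sup_upper_bound hsA Aa.
have cb : c <= b by apply: ge_sup; [exists a|move=> s [/andP [_ ->]]].
have e0' : 0 <= e := ltW e0.
have hc : claim a e K C E g U c.
  case: (eqVneq c a) => [->|cna]; first exact: claim_a.
  have altc : a < c by rewrite lt_neqAle eq_sym cna ac.
  case: (pselect (U c)) => Uc.
  - have : nbhs c U by apply: open_nbhs_nbhs; split.
    move/nbhsR_P => [rho rho0 hrho].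
    have [d d0 hd] := hall c ac cb.
    pose eta := Num.min (Num.min rho d) (c - a).
    have [eta1 eta2] : eta <= Num.min rho d /\ eta <= c - a := minfacts _ _.
    have [eta3 eta4] := minfacts rho d.
    have eta0 : 0 < eta by rewrite !lt_min rho0 d0 subr_gt0 altc.
    have [s As hs] := sup_adherent eta0 hsA; rewrite -/c in hs.
    have sc : s <= c := sup_upper_bound hsA As.
    case: As => [/andP [as_ sb] hAs]; have cs := hAs s as_ (lexx s).
    apply: (claim_ext2 e0' cs as_ sc).
      move=> z sz zc; apply: hrho.
      by rewrite ltr_norml; apply/andP; split; lra.
    have := hd s as_ sb; rewrite ltr_norml => /(_ ltac:(apply/andP; split; lra)).
    rewrite (distrC (g s)) (ler0_norm (_ : s - c <= 0)); last by lra.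
    move=> h; have := ler_norm (E c - E s); rewrite (distrC (E c)); lra.
  - have nNc : ~ N c by move/NU.
    have [d d0 hd] := hgood c ac cb nNc e e0.
    pose eta := Num.min d (c - a).
    have [eta1 eta2] : eta <= d /\ eta <= c - a := minfacts _ _.
    have eta0 : 0 < eta by rewrite !lt_min d0 subr_gt0 altc.
    have [s As hs] := sup_adherent eta0 hsA; rewrite -/c in hs.
    have sc : s <= c := sup_upper_bound hsA As.
    case: As => [/andP [as_ sb] hAs]; have cs := hAs s as_ (lexx s).
    case: (eqVneq s c) => [<-|snc]; first exact: cs.
    have sltc : s < c by rewrite lt_neqAle snc sc.
    apply: (claim_ext1 e0' cs sc).
    have := hd s as_ sb; rewrite ltr_norml => /(_ ltac:(apply/andP; split; lra)).
    by case=> _ /(_ sltc).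
have Ac : A c.
  split; first by rewrite ac cb.
  move=> r ar rc; case: (eqVneq r c) => [->|rnc]; first exact: hc.
  have rltc : r < c by rewrite lt_neqAle rnc rc.
  have [s [_ hAs] hs] := sup_adherent (ltac:(by rewrite subr_gt0) : 0 < c - r) hsA.
  rewrite -/c in hs; apply: hAs => //; lra.
have cbe : c = b.
  apply/eqP; rewrite eq_le cb /= leNgt; apply/negP => cltb.
  suff [eta eta0 Aeta] : exists2 eta, 0 < eta & A (c + eta).
    have := sup_upper_bound hsA Aeta; rewrite -/c; lra.
  case: Ac => _ hAc.
  case: (pselect (U c)) => Uc.
  - have : nbhs c U by apply: open_nbhs_nbhs; split.
    move/nbhsR_P => [rho rho0 hrho].
    have [d d0 hd] := hall c ac cb.
    pose eta := Num.min (Num.min rho d) (b - c) / 2.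
    have [eta1 eta2] := minfacts (Num.min rho d) (b - c).
    have [eta3 eta4] := minfacts rho d.
    have eta0' : 0 < Num.min (Num.min rho d) (b - c) by rewrite !lt_min rho0 d0 subr_gt0 cltb.
    exists eta; first by rewrite divr_gt0.
    split; first by apply/andP; split; rewrite /eta; lra.
    move=> r ar rce; case: (lerP r c) => [rc|crlt]; first exact: hAc.
    apply: (claim_ext2 e0' (hAc c ac (lexx c)) ac (ltW crlt)).
      move=> z cz zr; apply: hrho.
      by rewrite ltr_norml; apply/andP; split; rewrite /eta in rce; lra.
    have := hd r ar; rewrite ltr_norml.
    move=> /(_ ltac:(rewrite /eta in rce; lra)) /(_ ltac:(apply/andP; split; rewrite /eta in rce; lra)).
    rewrite (ger0_norm (_ : 0 <= r - c)); last by lra.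
    move=> h; have := ler_norm (E r - E c); lra.
  - have nNc : ~ N c by move/NU.
    have [d d0 hd] := hgood c ac cb nNc e e0.
    pose eta := Num.min d (b - c) / 2.
    have [eta1 eta2] := minfacts d (b - c).
    have eta0' : 0 < Num.min d (b - c) by rewrite !lt_min d0 subr_gt0 cltb.
    exists eta; first by rewrite divr_gt0.
    split; first by apply/andP; split; rewrite /eta; lra.
    move=> r ar rce; case: (lerP r c) => [rc|crlt]; first exact: hAc.
    apply: (claim_ext1 e0' (hAc c ac (lexx c)) (ltW crlt)).
    have := hd r ar; rewrite ltr_norml.
    move=> /(_ ltac:(rewrite /eta in rce; lra)) /(_ ltac:(apply/andP; split; rewrite /eta in rce; lra)).
    by case=> /(_ crlt).
have [n [u [v [h1 h2 h3 h4]]]] : claim a e K C E g U b by rewrite -cbe; exact: hc.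
have hs : \sum_(k < n) (v k - u k) < dl.
  apply: (sum_len_lt mU hU) => //.
  by move=> k kn; have [? [? ?]] := h1 k kn.
have hAC := hdl1 n (fun k : 'I_n => u k) (fun k : 'I_n => v k).
have hs1 : \sum_(k < n) (v k - u k) < dl1 by lra.
have := hAC (fun k => h1 k (ltn_ord k)) (fun k l kl => h2 k l (ltn_ord k) (ltn_ord l) kl) hs1.
rewrite big_split /= -!mulr_sumr in h4.
set S1 := \sum_(k < n) `|g (v k) - g (u k)| in h4 *.
set S2 := \sum_(k < n) (v k - u k) in h4 hs.
move=> hS1.
have : K * S1 <= K * e by apply: ler_wpM2l => //; lra.
have : C * S2 <= C * e by apply: ler_wpM2l => //; lra.
lra.
Qed.
End Mono.

Section Deriv.
Context {R : realType} {H : completeNormedModType R}.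

Lemma nbhsV_P (V : normedModType R) (c : V) (P : V -> Prop) :
  (\forall y \near c, P y) <->
  exists2 d : R, 0 < d & forall y, `|y - c| < d -> P y.
Proof.
split.
  move=> /nbhs_ballP [d d0 Hd]; exists d => // r rc.
  apply: Hd => //; rewrite -ball_normE /ball_ /= distrC; exact: rc.
move=> [d d0 Hd]; apply/nbhs_ballP; exists d => // r.
rewrite -ball_normE /ball_ /= distrC => rc; exact: Hd.
Qed.

Definition hder (D : set R) (y : R -> H) t (v : H) := forall e, 0 < e ->
  exists2 d, 0 < d & forall r, D r -> `|r - t| < d ->
    `|y r - y t - (r - t) *: v| <= e * `|r - t|.

Definition rder (D : set R) (y : R -> R) t (v : R) := forall e, 0 < e ->
  exists2 d, 0 < d & forall r, D r -> `|r - t| < d ->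
    `|y r - y t - (r - t) * v| <= e * `|r - t|.

Lemma hdw_hder D y t v : has_deriv_within D y t v -> hder D y t v.
Proof.
move=> hd e e0.
move/cvgrPdist_le: hd => /(_ e e0) /withinR_P [d d0 hd].
exists d => // r Dr rt.
case: (eqVneq r t) => [->|rnt].
  by rewrite !subrr scale0r subr0 !normr0 mulr0.
have Drt : (D `\ t) r by split => //= /eqP; rewrite (negbTE rnt).
have := hd r Drt rt.
have -> : y r - y t - (r - t) *: v = (r - t) *: ((r - t)^-1 *: (y r - y t) - v).
  rewrite scalerBr scalerA mulfV ?scale1r //.
  by rewrite subr_eq0.
rewrite normrZ distrC => h.
by rewrite mulrC ler_wpM2r.
Qed.

Lemma hder_bound D y t v : hder D y t v ->
  exists2 d, 0 < d & forall r, D r -> `|r - t| < d ->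
    `|y r - y t| <= (`|v| + 1) * `|r - t|.
Proof.
move=> /(_ 1 ltr01) [d d0 hd]; exists d => // r Dr rt.
have := hd r Dr rt.
have := ler_normD (y r - y t - (r - t) *: v) ((r - t) *: v).
rewrite subrK normrZ => h1 h2.
have : `|y r - y t| <= 1 * `|r - t| + `|r - t| * `|v| by apply: le_trans h1 _; rewrite lerD2r.
lra.
Qed.

Lemma rderD D (P Q : R -> R) t L1 L2 : rder D P t L1 -> rder D Q t L2 ->
  rder D (fun s => P s + Q s) t (L1 + L2).
Proof.
move=> hP hQ e e0.
have e20 : 0 < e / 2 by rewrite divr_gt0.
have [d1 d10 h1] := hP _ e20.
have [d2 d20 h2] := hQ _ e20.
exists (Num.min d1 d2); first by rewrite lt_min d10 d20.
move=> r Dr; rewrite lt_min => /andP [r1 r2].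
have := h1 r Dr r1; have := h2 r Dr r2.
have -> : P r + Q r - (P t + Q t) - (r - t) * (L1 + L2) =
  (P r - P t - (r - t) * L1) + (Q r - Q t - (r - t) * L2) by ring.
move=> a1 a2; apply: (le_trans (ler_normD _ _)).
have -> : e * `|r - t| = e / 2 * `|r - t| + e / 2 * `|r - t| by field.
exact: lerD.
Qed.
End Deriv.

Section Chain.
Context {R : realType} {H : completeNormedModType R} (inner : H -> H -> R)
  (hin : is_inner_product inner).

Lemma chain_rder (f : H -> R) (G : H) D x t v :
  differentiable f (x t) -> (forall h, 'd f (x t) h = inner G h) -> hder D x t v ->
  rder D (fun s => f (x s)) t (inner G v).
Proof.
move=> df dG hx e e0.
pose nv := `|v| + 1; pose nG := `|G| + 1.
have nv0 : 0 < nv by rewrite /nv; have := normr_ge0 v; lra.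
have nG0 : 0 < nG by rewrite /nG; have := normr_ge0 G; lra.
have ee0 : 0 < e / (2 * nv) by rewrite divr_gt0 // mulr_gt0.
have /eqaddoP := diff_locally df.
move=> /(_ _ ee0) /nbhsV_P [d1 d10 hd1].
pose e2 := Num.min 1 (e / (2 * nG)).
have [e21 e22] : e2 <= 1 /\ e2 <= e / (2 * nG) := minfacts _ _.
have e20 : 0 < e2 by rewrite lt_min ltr01 divr_gt0 // mulr_gt0.
have [d2 d20 hd2] := hx e2 e20.
have d1v : 0 < d1 / nv by rewrite divr_gt0.
exists (Num.min d2 (d1 / nv)); first by rewrite lt_min d20 d1v.
move=> r Dr; rewrite lt_min => /andP [r2 r1].
set h := x r - x t.
have hk := hd2 r Dr r2; rewrite -/h in hk.
have nrt := normr_ge0 (r - t).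
have hh : `|h| <= nv * `|r - t|.
  have := ler_normD (h - (r - t) *: v) ((r - t) *: v).
  rewrite subrK normrZ => h1.
  have : e2 * `|r - t| <= 1 * `|r - t| by apply: ler_wpM2r.
  rewrite /nv; lra.
have hh1 : `|h| < d1.
  apply: (le_lt_trans hh).
  by rewrite mulrC -ltr_pdivlMr.
have := hd1 h; rewrite subr0 => /(_ hh1) /=.
move=> hf0; have hf : `|f (h + x t) - (f (x t) + 'd f (x t) h)| <= e / (2 * nv) * `|h| := hf0.
rewrite subrK dG in hf.
have -> : f (x r) - f (x t) - (r - t) * inner G v =
  (f (x r) - (f (x t) + inner G h)) + inner G (h - (r - t) *: v).
  by rewrite [inner G (h - _)](innerBr hin) (innerZr hin); ring.
apply: (le_trans (ler_normD _ _)).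
have hG := inner_CS hin G (h - (r - t) *: v).
have a1 : e / (2 * nv) * `|h| <= e / 2 * `|r - t|.
  apply: (le_trans (ler_wpM2l (ltW ee0) hh)).
  rewrite mulrA; apply: ler_wpM2r => //.
  by rewrite invfM mulrA mulfVK ?gt_eqF // mulrC.
have a2 : `|G| * `|h - (r - t) *: v| <= e / 2 * `|r - t|.
  apply: (le_trans (ler_wpM2l (normr_ge0 G) hk)).
  rewrite mulrA; apply: ler_wpM2r => //.
  apply: (le_trans (ler_wpM2l (normr_ge0 G) e22)).
  have eG0 : 0 <= e / (2 * nG) by rewrite ltW // divr_gt0 // mulr_gt0.
  apply: (le_trans (ler_wpM2r eG0 (_ : `|G| <= nG))); first by rewrite /nG lerDl.
  have nGn : nG != 0 by rewrite gt_eqF.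
  by rewrite le_eqVlt; apply/orP; left; apply/eqP; field.
have -> : e * `|r - t| = e / 2 * `|r - t| + e / 2 * `|r - t| by field.
apply: lerD; first exact: le_trans hf a1.
exact: le_trans hG a2.
Qed.

Lemma inner_sq (u h : H) : inner (u + h) (u + h) = inner u u + 2 * inner u h + inner h h.
Proof.
rewrite (innerDl hin) !(innerDr hin) (innerC hin h u); ring.
Qed.

Lemma sq_rder D (y : R -> H) t w : hder D y t w ->
  rder D (fun s => `|y s| ^+ 2 / 2) t (inner (y t) w).
Proof.
move=> hy e e0.
pose nw := `|w| + 1; pose ny := `|y t| + 1.
have nw0 : 0 < nw by rewrite /nw; have := normr_ge0 w; lra.
have ny0 : 0 < ny by rewrite /ny; have := normr_ge0 (y t); lra.
pose e2 := Num.min 1 (e / (2 * ny)).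
have [e21 e22] : e2 <= 1 /\ e2 <= e / (2 * ny) := minfacts _ _.
have e20 : 0 < e2 by rewrite lt_min ltr01 divr_gt0 // mulr_gt0.
have [d2 d20 hd2] := hy e2 e20.
have dw0 : 0 < e / (nw ^+ 2) by rewrite divr_gt0 // exprn_gt0.
exists (Num.min d2 (e / (nw ^+ 2))); first by rewrite lt_min d20 dw0.
move=> r Dr; rewrite lt_min => /andP [r2 r1].
have hk := hd2 r Dr r2.
move: hk; set h := y r - y t => hk.
have nrt := normr_ge0 (r - t).
have hh : `|h| <= nw * `|r - t|.
  have := ler_normD (h - (r - t) *: w) ((r - t) *: w).
  rewrite subrK normrZ => h1.
  have : e2 * `|r - t| <= 1 * `|r - t| by apply: ler_wpM2r.
  rewrite /nw; lra.
have yrE : y r = y t + h by rewrite /h addrC subrK.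
clearbody h.
have -> : `|y r| ^+ 2 / 2 - `|y t| ^+ 2 / 2 - (r - t) * inner (y t) w =
    inner (y t) (h - (r - t) *: w) + inner h h / 2.
  by rewrite -!(innerxx hin) yrE inner_sq (innerBr hin) (innerZr hin); field.
apply: (le_trans (ler_normD _ _)).
have b1 : `|inner (y t) (h - (r - t) *: w)| <= e / 2 * `|r - t|.
  apply: (le_trans (inner_CS hin _ _)).
  apply: (le_trans (ler_wpM2l (normr_ge0 _) hk)).
  rewrite mulrA; apply: ler_wpM2r => //.
  apply: (le_trans (ler_wpM2l (normr_ge0 _) e22)).
  have eG0 : 0 <= e / (2 * ny) by rewrite ltW // divr_gt0 // mulr_gt0.
  apply: (le_trans (ler_wpM2r eG0 (_ : `|y t| <= ny))); first by rewrite /ny lerDl.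
  have nGn : ny != 0 by rewrite gt_eqF.
  by rewrite le_eqVlt; apply/orP; left; apply/eqP; field.
have b2 : `|inner h h / 2| <= e / 2 * `|r - t|.
  rewrite (innerxx hin) ger0_norm; last by rewrite divr_ge0 // exprn_ge0.
  have hh2 : `|h| ^+ 2 <= (nw * `|r - t|) ^+ 2.
    by rewrite ler_pXn2r // ?nnegrE // mulr_ge0 // ltW.
  have hh3 : (nw * `|r - t|) ^+ 2 <= e * `|r - t|.
    rewrite exprMn expr2 mulrA; apply: ler_wpM2r => //.
    rewrite -expr2 mulrC -ler_pdivlMr ?exprn_gt0 //; exact: ltW.
  lra.
have -> : e * `|r - t| = e / 2 * `|r - t| + e / 2 * `|r - t| by field.
exact: lerD.
Qed.
End Chain.

Arguments chain_rder {R H inner}.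
Arguments sq_rder {R H inner}.

Section Misc.
Context {R : realType} {H : completeNormedModType R} (inner : H -> H -> R)
  (hin : is_inner_product inner).

Lemma cont_withinP (a b : R) (phi : R -> R) :
  (forall c, a <= c -> c <= b -> forall e, 0 < e -> exists2 d, 0 < d &
     forall r, a <= r -> r <= b -> `|r - c| < d -> `|phi r - phi c| <= e) ->
  {within `[a, b], continuous phi}.
Proof.
move=> hc; apply/subspace_continuousP => c /=; rewrite in_itv /= => /andP [ac cb].
apply/cvgrPdist_le => e e0; apply/withinR_P.
have [d d0 hd] := hc c ac cb e e0.
exists d => // r; rewrite /= in_itv /= => /andP [ar rb] rc.
by rewrite distrC; apply: hd.
Qed.

Lemma within_cont_eps (A : set R) (y : R -> H) : {within A, continuous y} ->
  forall c, A c -> forall e, 0 < e -> exists2 d, 0 < d &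
    forall r, A r -> `|r - c| < d -> `|y r - y c| <= e.
Proof.
move=> /subspace_continuousP hy c Ac e e0.
have := hy c Ac; move/cvgrPdist_le => /(_ e e0) /withinR_P [d d0 hd].
by exists d => // r Ar rc; rewrite distrC; apply: hd.
Qed.

Lemma proj_vi {m : nat} (grad : 'I_m -> H -> H) (y z p : H) (i : 'I_m) :
  is_proj [set c + z | c in Cset grad y] 0 p ->
  0 <= inner p (grad i y + z - p).
Proof.
move=> [[c0 [lam [l0 l1 c0E]] <-] hmin].
set q := grad i y + z - (c0 + z).
have key : forall s, 0 < s -> s <= 1 -> 0 <= 2 * inner (c0 + z) q + s * `|q| ^+ 2.
  move=> s s0 s1.
  pose mu j := (1 - s) * lam j + (if j == i then s else 0).
  have hK : [set c + z | c in Cset grad y] ((c0 + z) + s *: q).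
    exists (\sum_(j < m) mu j *: grad j y).
      exists mu; split.
      - move=> j; rewrite /mu; apply: addr_ge0.
          by apply: mulr_ge0 => //; lra.
        by case: ifP => _ //; exact: ltW.
      - rewrite /mu big_split /= -mulr_sumr l1 mulr1.
        rewrite (bigD1 i) //= eqxx big1 ?addr0; first by ring.
        by move=> j /negbTE ->.
      - by [].
    rewrite /mu.
    under eq_bigr do rewrite scalerDl.
    rewrite big_split /=.
    under eq_bigr do rewrite -scalerA.
    rewrite -scaler_sumr -c0E.
    rewrite (bigD1 i) //= eqxx big1 ?addr0; last by move=> j /negbTE ->; rewrite scale0r.
    rewrite /q; set g := grad i y.
    rewrite [X in g + z - X]addrC addrKA scalerBr scalerBl scale1r.
    rewrite [LHS]addrAC [X in X + _ = _]addrAC [LHS]addrAC.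
    by rewrite addrA.
  have := hmin _ hK; rewrite !subr0.
  move=> hn.
  have : `|c0 + z| ^+ 2 <= `|c0 + z + s *: q| ^+ 2.
    by rewrite ler_pXn2r // ?nnegrE ?normr_ge0.
  rewrite -!(innerxx hin) (@inner_sq _ _ inner hin (c0 + z) (s *: q)) !(innerZr hin) (innerZl hin).
  move=> h.
  have : 0 <= s * (2 * inner (c0 + z) q + s * inner q q) by lra.
  by rewrite pmulr_rge0.
rewrite -/q.
rewrite leNgt; apply/negP => hlt.
set P := inner (c0 + z) q in key hlt.
have hlt2 := hlt.
pose Q := `|q| ^+ 2.
have Q0 : 0 <= Q by rewrite exprn_ge0.
pose s := Num.min 1 (- P / (Q + 1)).
have [s1 s2] : s <= 1 /\ s <= - P / (Q + 1) := minfacts _ _.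
have Pn : P < 0 by lra.
have s0 : 0 < s by rewrite lt_min ltr01 divr_gt0 //; lra.
have := key s s0 s1.
have : s * Q <= - P.
  have : s * (Q + 1) <= - P by rewrite -ler_pdivlMr //; lra.
  have : 0 <= s by exact: ltW.
  nra.
rewrite -/Q; lra.
Qed.
End Misc.

Theorem corollary4p2 (R : realType) (H : completeNormedModType R)
  (inner : H -> H -> R) (m : nat) (f : 'I_m -> H -> R) (grad : 'I_m -> H -> H)
  (alpha t0 : R) (x0 : H) (x : R -> H) :
  is_inner_product inner ->
  (0 < m)%N ->
  (forall i, convex_function setT (f i : convex_lmodType H -> R^o)) ->
  (forall i, is_gradient inner (f i) (grad i)) ->
  (forall i, continuous (grad i)) ->
  0 < alpha -> 0 < t0 ->
  is_solution inner grad alpha t0 x0 x ->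
  forall (i : 'I_m) (t : R), t0 <= t -> f i (x t) <= f i x0.
Proof.
move=> hin _ _ hgrad hgc alpha0 t00 [xd [xdd [hx [hxdc [hac [_ [_ [hxdd [hproj [x00 xd00]]]]]]]]]] i b t0b.
pose D : set R := [set` `[t0, +oo[%R].
have Dr : forall r, t0 <= r -> D r by move=> r tr; rewrite /D /= in_itv /= tr.
pose E s := f i (x s) + `|xd s| ^+ 2 / 2.
suff : E b <= E t0.
  rewrite /E x00 xd00 normr0 expr0n /= mul0r addr0.
  have := exprn_ge0 2 (normr_ge0 (xd b)); lra.
move: hxdd => [A1 [mA1 A10 sA1]].
move: hproj => [A2 [mA2 A20 sA2]].
pose N := A1 `|` A2 `|` [set t0].
have mN : measurable N by apply: measurableU; [apply: measurableU|exact: measurable_set1].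
have N0 : lebesgue_measure N = 0%E.
  apply/eqP; rewrite eq_le measure_ge0 andbT.
  apply: (le_trans (measureU2 _ _ _)) => //; first exact: measurableU.
  apply: (le_trans (leeD (measureU2 _ mA1 mA2) (lexx _))).
  set X1 := (X in (X + _ + _)%E).
  set X2 := (X in (_ + X + _)%E).
  set X3 := (X in (_ + _ + X)%E).
  have -> : X1 = 0%E by exact: A10.
  have -> : X2 = 0%E by exact: A20.
  have -> : X3 = 0%E by exact: lebesgue_measure_set1.
  by rewrite !adde0.
have hxder : forall c, t0 <= c -> hder D x c (xd c).
  by move=> c tc; apply: hdw_hder; exact: hx.
have cM : {within `[t0, b], continuous (fun s => `|xd s|)}.
  apply: cont_withinP => c tc cb e e0.
  have [d d0 hd] := @within_cont_eps _ _ D xd hxdc c (Dr c tc) e e0.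
  exists d => // r tr rb rc.
  exact: le_trans (ler_dist_dist _ _) (hd r (Dr r tr) rc).
have [cm _ hM] := EVT_max t0b cM.
set M := `|xd cm| in hM.
have hM' : forall s, t0 <= s -> s <= b -> `|xd s| <= M.
  by move=> s ts sb; apply: hM; rewrite in_itv /= ts sb.
have M0 : 0 <= M := normr_ge0 _.
have cG : {within `[t0, b], continuous (fun s => `|grad i (x s)|)}.
  apply: cont_withinP => c tc cb e e0.
  have := hgc i (x c); move/cvgrPdist_le => /(_ e e0) /nbhsV_P [d1 d10 hd1].
  have [d2 d20 hd2] := @hder_bound _ _ D x c (xd c) (hxder c tc).
  have nv0 : 0 < `|xd c| + 1 by have := normr_ge0 (xd c); lra.
  exists (Num.min d2 (d1 / (`|xd c| + 1))); first by rewrite lt_min d20 divr_gt0.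
  move=> r tr rb; rewrite lt_min => /andP [r2 r1].
  have hxr := hd2 r (Dr r tr) r2.
  have : `|x r - x c| < d1.
    apply: (le_lt_trans hxr); rewrite mulrC -ltr_pdivlMr //.
  move/hd1; rewrite distrC => h.
  exact: le_trans (ler_dist_dist _ _) h.
have [cg _ hG] := EVT_max t0b cG.
set G := `|grad i (x cg)| in hG.
have hG' : forall s, t0 <= s -> s <= b -> `|grad i (x s)| <= G.
  by move=> s ts sb; apply: hG; rewrite in_itv /= ts sb.
have G0 : 0 <= G := normr_ge0 _.
have hP : forall c, t0 <= c ->
    rder D (fun s => f i (x s)) c (inner (grad i (x c)) (xd c)).
  move=> c tc; have [df dG] := hgrad i (x c).
  exact: (chain_rder hin (f i) (grad i (x c)) D x c (xd c) df dG (hxder c tc)).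
apply: (ac_mono t0 b M (G * M + 1) E xd N) => //.
- by rewrite addr_ge0 // mulr_ge0.
- exact: hac.
- move=> c tc cb nNc e e0.
  have ctc : t0 < c.
    rewrite lt_neqAle tc andbT; apply/negP => /eqP tce; apply: nNc; right; by rewrite tce.
  have nA1 : ~ A1 c by move=> h; apply: nNc; left; left.
  have nA2 : ~ A2 c by move=> h; apply: nNc; left; right.
  have P1 : has_deriv_within `[t0, +oo[ xd c (xdd c).
    case: (pselect (t0 < c -> has_deriv_within `[t0, +oo[ xd c (xdd c))) => [h|np].
      exact: h.
    by exfalso; apply: nA1; apply: sA1.
  have P2 : is_proj [set c' + xdd c | c' in Cset grad (x c)] 0 (- ((alpha / c) *: xd c)).
    case: (pselect (t0 < c -> is_proj [set c' + xdd c | c' in Cset grad (x c)] 0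
                        (- ((alpha / c) *: xd c)))) => [h|np].
      exact: h.
    by exfalso; apply: nA2; apply: sA2.
  have hQ := sq_rder hin D xd c (xdd c) (hdw_hder D xd c (xdd c) P1).
  have hE := rderD D _ _ c _ _ (hP c tc) hQ.
  set L := inner (grad i (x c)) (xd c) + inner (xd c) (xdd c) in hE.
  have L0 : L <= 0.
    have := proj_vi inner hin grad (x c) (xdd c) _ i P2.
    set a := alpha / c.
    have a0 : 0 < a by rewrite divr_gt0 // (lt_trans t00 ctc).
    rewrite opprK (innerNl hin) (innerZl hin) !(innerDr hin) (innerZr hin) (innerxx hin).
    rewrite /L (innerC hin (grad i (x c))).
    have := exprn_ge0 2 (normr_ge0 (xd c)).
    nra.
  have [d d0 hd] := hE e e0.
  exists d => // r tr rb rc.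
  have := hd r (Dr r tr) rc.
  rewrite /E => h.
  have hn1 := ler_norm (f i (x r) + `|xd r| ^+ 2 / 2 - (f i (x c) + `|xd c| ^+ 2 / 2) - (r - c) * L).
  have hn2 := ler_norm (- (f i (x r) + `|xd r| ^+ 2 / 2 - (f i (x c) + `|xd c| ^+ 2 / 2) - (r - c) * L)).
  rewrite normrN in hn2.
  split => hrc.
    have hrc' : (r - c) * L <= 0 by rewrite mulr_ge0_le0 // subr_ge0 ltW.
    rewrite (gtr0_norm (_ : 0 < r - c)) in h; last by rewrite subr_gt0.
    lra.
  have hrc' : 0 <= (r - c) * L by rewrite mulr_le0 // subr_le0 ltW.
  rewrite (ltr0_norm (_ : r - c < 0)) in h; last by rewrite subr_lt0.
  lra.
- move=> c tc cb.
  have [d d0 hd] := hP c tc 1 ltr01.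
  exists d => // r tr rb rc.
  have h1 := hd r (Dr r tr) rc.
  rewrite mul1r in h1.
  set L1 := inner (grad i (x c)) (xd c) in h1.
  have hL1 : `|L1| <= G * M.
    apply: (le_trans (inner_CS hin _ _)).
    by apply: ler_pM => //; [exact: hG'|exact: hM'].
  have hPr : `|f i (x r) - f i (x c)| <= (G * M + 1) * `|r - c|.
    have := ler_normD (f i (x r) - f i (x c) - (r - c) * L1) ((r - c) * L1).
    rewrite subrK normrM => h2.
    have : `|r - c| * `|L1| <= `|r - c| * (G * M) by apply: ler_wpM2l.
    lra.
  have hQr : `| `|xd r| ^+ 2 / 2 - `|xd c| ^+ 2 / 2 | <= M * `|xd r - xd c|.
    have -> : `|xd r| ^+ 2 / 2 - `|xd c| ^+ 2 / 2 =
      (`|xd r| - `|xd c|) * ((`|xd r| + `|xd c|) / 2) by ring.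
    rewrite normrM (ger0_norm (_ : 0 <= (`|xd r| + `|xd c|) / 2)); last first.
      by rewrite divr_ge0 // addr_ge0.
    have hd1 := ler_dist_dist (xd r) (xd c).
    have hs : (`|xd r| + `|xd c|) / 2 <= M.
      have := hM' r tr rb; have := hM' c tc cb; lra.
    apply: (@le_trans _ _ (`|xd r - xd c| * ((`|xd r| + `|xd c|) / 2))).
      by apply: ler_wpM2r => //; rewrite divr_ge0 // addr_ge0.
    by rewrite mulrC; apply: ler_wpM2r.
  rewrite /E.
  have -> : f i (x r) + `|xd r| ^+ 2 / 2 - (f i (x c) + `|xd c| ^+ 2 / 2) =
    (`|xd r| ^+ 2 / 2 - `|xd c| ^+ 2 / 2) + (f i (x r) - f i (x c)) by ring.
  apply: (le_trans (ler_normD _ _)).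
  exact: lerD.
Qed.
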